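(* Let $G$ be a finite group and $p$ a prime dividing $|G|$. If the poset $\mathcal{A}_p(G)'/G$ has height $1$, then it is a contractible finite space.
   Context: $\mathcal{A}_p(G)$ is the poset of non-trivial elementary abelian $p$-subgroups of $G$, with $G$ acting by conjugation. $\mathcal{A}_p(G)'$ is the poset of non-empty chains of $\mathcal{A}_p(G)$ ordered by inclusion, with componentwise action; $\mathcal{A}_p(G)'/G$ is the orbit poset ($\overline{c}\le\overline{d}$ iff some representatives satisfy $c_1\subseteq d_1$), regarded as a finite $T_0$ space whose open sets are the down-sets. The height of a poset is the maximal length $n$ of a chain $x_0<x_1<\dots<x_n$. *)

(* Defs.v *)
From mathcomp Require Import all_boot all_fingroup all_solvable.
From Stdlib Require Reals.
Set Implicit Arguments. Unset Strict Implicit. Unset Printing Implicit Defensive.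

Section Defs.
Variable gT : finGroupType.
Local Open Scope group_scope.

Definition Ap (G : {set gT}) (p : nat) : {set {set gT}} :=
  [set A : {set gT} | [&& group_set A, A \subset G, p.-abelem A & A != 1]].

Definition Ap_chains (G : {set gT}) (p : nat) : {set {set {set gT}}} :=
  [set c : {set {set gT}} | [&& c \subset Ap G p, c != set0 &
     [forall A in c, forall B in c, (A \subset B) || (B \subset A)]]].

Definition chain_conj (c : {set {set gT}}) (x : gT) : {set {set gT}} :=
  [set A :^ x | A in c].

Definition chain_orbit (G : {set gT}) (c : {set {set gT}}) :
  {set {set {set gT}}} := [set chain_conj c x | x in G].

Definition Ap_orbits (G : {set gT}) (p : nat) : {set {set {set {set gT}}}} :=
  [set chain_orbit G c | c in Ap_chains G p].

Definition orbit_le (o1 o2 : {set {set {set gT}}}) : bool :=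
  [exists c in o1, exists d in o2, c \subset d].

End Defs.

Section FinSpace.
Variable T : finType.
Variables (D : {set T}) (le : rel T).

Definition lt_of (x y : T) : bool := le x y && (x != y).

Definition poset_height (n : nat) : Prop :=
  (exists s : seq T, size s = n.+1 /\ all (mem D) s /\ sorted lt_of s) /\
  (forall s : seq T, all (mem D) s -> sorted lt_of s -> size s <= n.+1).

(* open sets of the associated finite T0 space: the down-sets *)
Definition fs_open (U : {set T}) : Prop :=
  U \subset D /\ forall x y, x \in U -> y \in D -> le y x -> y \in U.

(* H : D x [0,1] -> D is continuous for the product topology; since the
   down-set {y | le y x} is the minimal open neighbourhood of x, this is the
   literal meaning of "preimages of open sets are open". *)
Definition fs_homotopy_continuous (H : T -> Reals.Rdefinitions.R -> T) : Prop :=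
  forall V : {set T}, fs_open V ->
  forall x t, x \in D -> (Reals.Rdefinitions.Rle Reals.Rdefinitions.R0 t /\ Reals.Rdefinitions.Rle t Reals.Rdefinitions.R1) ->
    H x t \in V ->
    exists eps : Reals.Rdefinitions.R, Reals.Rdefinitions.Rlt Reals.Rdefinitions.R0 eps /\
      forall y s, y \in D -> le y x ->
        (Reals.Rdefinitions.Rle Reals.Rdefinitions.R0 s /\ Reals.Rdefinitions.Rle s Reals.Rdefinitions.R1) ->
        Reals.Rdefinitions.Rlt (Reals.Rbasic_fun.Rabs (Reals.Rdefinitions.Rminus s t)) eps ->
        H y s \in V.

Definition fs_contractible : Prop :=
  exists (x0 : T) (H : T -> Reals.Rdefinitions.R -> T),
    x0 \in D /\
    (forall x t, x \in D -> (Reals.Rdefinitions.Rle Reals.Rdefinitions.R0 t /\ Reals.Rdefinitions.Rle t Reals.Rdefinitions.R1) ->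
       H x t \in D) /\
    (forall x, x \in D -> H x Reals.Rdefinitions.R0 = x) /\
    (forall x, x \in D -> H x Reals.Rdefinitions.R1 = x0) /\
    fs_homotopy_continuous H.

End FinSpace.

(* Main.v *)
Require Import Defs.
From mathcomp Require Import all_boot all_fingroup all_solvable zify.
From Stdlib Require Import Reals Lra.
Set Implicit Arguments. Unset Strict Implicit. Unset Printing Implicit Defensive.

Section Homotopy.
Variable T : finType.
Variables (D : {set T}) (le : rel T) (r : T) (g : nat -> T -> T).

Definition lam (t : R) : nat :=
  if Rlt_dec t (1/5) then 4 else if Rle_dec t (2/5) then 3
  else if Rlt_dec t (3/5) then 2 else if Rle_dec t (4/5) then 1 else 0.

Definition Dom (i j : nat) : bool :=
  ((i == 4) && (j == 3)) || ((i == 2) && (j == 3)) || ((i == 2) && (j == 1))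
  || ((i == 0) && (j == 1)).

Lemma lam_cont t : exists eps, (0 < eps)%R /\ forall s, (Rabs (s - t) < eps)%R ->
  lam s = lam t \/ Dom (lam s) (lam t).
Proof.
rewrite /lam.
destruct (Rlt_dec t (1/5)) as [h1|h1].
  exists (1/5 - t)%R; split; first lra.
  move=> s /Rabs_def2 [hs1 hs2]; left.
  by destruct (Rlt_dec s (1/5)); [|lra].
destruct (Rle_dec t (2/5)) as [h2|h2].
  exists (1/5)%R; split; first lra.
  move=> s /Rabs_def2 [hs1 hs2].
  destruct (Rlt_dec s (1/5)); first by right.
  destruct (Rle_dec s (2/5)); first by left.
  destruct (Rlt_dec s (3/5)); first by right.
  lra.
destruct (Rlt_dec t (3/5)) as [h3|h3].
  exists (Rmin (t - 2/5) (3/5 - t))%R; split.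
    apply: Rmin_glb_lt; lra.
  move=> s /Rabs_def2 [hs1 hs2]; left.
  have m1 := Rmin_l (t - 2/5) (3/5 - t); have m2 := Rmin_r (t - 2/5) (3/5 - t).
  destruct (Rlt_dec s (1/5)); first lra.
  destruct (Rle_dec s (2/5)); first lra.
  destruct (Rlt_dec s (3/5)); first by [].
  lra.
destruct (Rle_dec t (4/5)) as [h4|h4].
  exists (1/5)%R; split; first lra.
  move=> s /Rabs_def2 [hs1 hs2].
  destruct (Rlt_dec s (1/5)); first lra.
  destruct (Rle_dec s (2/5)); first lra.
  destruct (Rlt_dec s (3/5)); first by right.
  destruct (Rle_dec s (4/5)); first by left.
  by right.
exists (t - 4/5)%R; split; first lra.
move=> s /Rabs_def2 [hs1 hs2]; left.
destruct (Rlt_dec s (1/5)); first lra.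
destruct (Rle_dec s (2/5)); first lra.
destruct (Rlt_dec s (3/5)); first lra.
destruct (Rle_dec s (4/5)); first lra.
by [].
Qed.

Hypothesis rD : r \in D.
Hypothesis gD : forall k x, x \in D -> g k x \in D.
Hypothesis gmono : forall k x y, x \in D -> y \in D -> le x y -> le (g k x) (g k y).
Hypothesis g4 : forall x, x \in D -> g 4 x = x.
Hypothesis g0 : forall x, x \in D -> g 0 x = r.
Hypothesis gdom : forall i j, Dom i j -> forall x, x \in D -> g i x = g j x \/ le (g i x) (g j x).

Lemma homotopy_contr : fs_contractible D le.
Proof.
exists r, (fun x t => g (lam t) x); split; first by [].
split; first by move=> x t xD _; apply: gD.
split.
  move=> x xD; rewrite /lam; destruct (Rlt_dec R0 (1/5)); first by apply: g4.
  lra.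
split.
  move=> x xD; rewrite /lam.
  destruct (Rlt_dec R1 (1/5)); first lra.
  destruct (Rle_dec R1 (2/5)); first lra.
  destruct (Rlt_dec R1 (3/5)); first lra.
  destruct (Rle_dec R1 (4/5)); first lra.
  by apply: g0.
move=> V [VD Vdown] x t xD _ HV.
have [eps [eps0 Heps]] := lam_cont t.
exists eps; split; first by [].
move=> y s yD yx _ hs.
have gyV : g (lam t) y \in V.
  apply: (Vdown (g (lam t) x)) => //; first exact: gD.
  exact: gmono.
case: (Heps s hs) => [->|hD]; first by [].
case: (gdom hD yD) => [->|hle]; first by [].
apply: (Vdown _ _ gyV); first exact: gD.
exact: hle.
Qed.
End Homotopy.


Section Tree.
Variable T : finType.
Variables (D : {set T}) (le : rel T) (r : T) (par : T -> T) (dep : T -> nat).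
Hypothesis rD : r \in D.
Hypothesis refl : forall x, x \in D -> le x x.
Hypothesis parD : forall x, x \in D -> par x \in D.
Hypothesis dep4 : forall x, x \in D -> dep x <= 4.
Hypothesis dep0 : forall x, x \in D -> dep x = 0 -> x = r.
Hypothesis depP : forall x, x \in D -> 0 < dep x -> dep (par x) = (dep x).-1.
Hypothesis parle : forall x, x \in D -> 0 < dep x ->
  if odd (dep x) then le (par x) x else le x (par x).
Hypothesis tree : forall x y, x \in D -> y \in D -> le x y ->
  [\/ x = y, 0 < dep y /\ x = par y | 0 < dep x /\ y = par x].

Definition anc n x := iter (dep x - n) par x.

Lemma iter_par k x : x \in D -> k <= dep x ->
  iter k par x \in D /\ dep (iter k par x) = dep x - k.
Proof.
move=> xD; elim: k => [|k IH] hk /=; first by rewrite subn0.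
have [iD idep] := IH (ltnW hk).
split; first exact: parD.
rewrite depP // ?idep; last by rewrite subn_gt0.
by rewrite subnS.
Qed.

Lemma ancD n x : x \in D -> anc n x \in D.
Proof. by move=> xD; have [] := iter_par xD (leq_subr n (dep x)). Qed.

Lemma anc_dep n x : x \in D -> dep (anc n x) = dep x - (dep x - n).
Proof. by move=> xD; have [] := iter_par xD (leq_subr n (dep x)). Qed.

Lemma anc_id n x : dep x <= n -> anc n x = x.
Proof. by rewrite /anc -subn_eq0 => /eqP ->. Qed.

Lemma anc_par n x : x \in D -> n < dep x -> anc n x = anc n (par x).
Proof.
move=> xD lt.
have dpos : 0 < dep x by apply: leq_ltn_trans lt.
have e : dep x - n = (dep (par x) - n).+1.
  rewrite (depP xD dpos); move: lt dpos; clear; lia.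
by rewrite /anc e iterSr.
Qed.

Lemma anc_mono n x y : x \in D -> y \in D -> le x y -> le (anc n x) (anc n y).
Proof.
move=> xD yD xy; case: (tree xD yD xy) => [<-|[dy e]|[dx e]].
- exact/refl/ancD.
- have dpy := depP yD dy.
  case: (leqP (dep y) n) => h.
    have hp : dep x <= n by rewrite e dpy; move: h; clear; lia.
    by rewrite (anc_id hp) (anc_id h).
  rewrite e -(anc_par yD h); apply/refl/ancD => //.
- have dpx := depP xD dx.
  case: (leqP (dep x) n) => h.
    have hp : dep y <= n by rewrite e dpx; move: h; clear; lia.
    by rewrite (anc_id hp) (anc_id h).
  rewrite e -(anc_par xD h); apply/refl/ancD => //.
Qed.

Lemma anc_step n x : x \in D -> anc n x = anc n.+1 x \/
  (n < dep x /\ anc n x = par (anc n.+1 x) /\ dep (anc n.+1 x) = n.+1).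
Proof.
move=> xD; case: (leqP (dep x) n) => h.
  have h' : dep x <= n.+1 by move: h; clear; lia.
  by left; rewrite (anc_id h) (anc_id h').
right; split=> //.
have e : dep x - n = (dep x - n.+1).+1 by move: h; clear; lia.
split; first by rewrite /anc e.
rewrite anc_dep //; move: h; clear; lia.
Qed.

Lemma contr_tree : fs_contractible D le.
Proof.
apply: (@homotopy_contr T D le r anc) => //.
- by move=> k x xD; apply: ancD.
- by move=> k x y xD yD; apply: anc_mono.
- by move=> x xD; apply: anc_id; apply: dep4.
- move=> x xD; apply: dep0; first exact: ancD.
  by rewrite anc_dep // subn0 subnn.
- move=> i j hD x xD.
  have key : forall n, n < 4 -> (anc n x = anc n.+1 x \/
     if odd n.+1 then le (anc n x) (anc n.+1 x) else le (anc n.+1 x) (anc n x)).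
    move=> n _; case: (anc_step n xD) => [->|[lt [e de]]]; first by left.
    right; have := parle (ancD n.+1 xD); rewrite de => /(_ isT).
    by rewrite e.
  move: hD; rewrite /Dom.
  case/orP => [/orP [/orP [/andP [/eqP -> /eqP ->]|/andP [/eqP -> /eqP ->]]|/andP [/eqP -> /eqP ->]]|/andP [/eqP -> /eqP ->]].
  + by case: (key 3 isT) => [->|h]; [left|right].
  + by case: (key 2 isT) => [->|h]; [left|right].
  + by case: (key 1 isT) => [->|h]; [left|right].
  + by case: (key 0 isT) => [->|h]; [left|right].
Qed.
End Tree.

Module Grp3.
Local Open Scope group_scope.

Section Grp.
Variables (gT : finGroupType) (G : {group gT}) (p : nat).
Hypothesis pr : prime p.
Hypothesis pG : p %| #|G|.
Hypothesis no3 : forall A B C, A \in Ap G p -> B \in Ap G p -> C \in Ap G p ->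
  A \proper B -> B \proper C -> False.

Lemma ApE (H : {group gT}) :
  ((H : {set gT}) \in Ap G p) = [&& H \subset G, p.-abelem H & H :!=: 1].
Proof. by rewrite inE groupP. Qed.

Lemma ApP A : A \in Ap G p -> exists H : {group gT}, A = H.
Proof. by rewrite inE => /andP [gA _]; exists (Group gA). Qed.

Definition small A := (A \in Ap G p) && [forall B in Ap G p, (B \subset A) ==> (B == A)].
Definition big A := (A \in Ap G p) && ~~ small A.

Lemma smallAp A : small A -> A \in Ap G p. Proof. by case/andP. Qed.
Lemma bigAp A : big A -> A \in Ap G p. Proof. by case/andP. Qed.

Lemma smallP A B : small A -> B \in Ap G p -> B \subset A -> B = A.
Proof.
case/andP=> _ /forall_inP h BAp BA; by apply/eqP; move: (h B BAp); rewrite BA.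
Qed.

Lemma bigP B : big B -> exists A, A \in Ap G p /\ A \proper B.
Proof.
case/andP=> BAp; rewrite /small BAp /= negb_forall_in => /existsP [A /andP [AAp]].
by rewrite negb_imply => /andP [h1 h2]; exists A; rewrite AAp properEneq h1 h2.
Qed.

Lemma big_max B C : big B -> C \in Ap G p -> B \subset C -> C = B.
Proof.
move=> bB CAp BC; have [A [AAp AB]] := bigP bB.
apply/eqP; apply/negPn/negP => nCB.
apply: (no3 AAp (bigAp bB) CAp AB); rewrite properEneq BC andbT eq_sym //.
Qed.

Lemma small_not_big A : small A -> ~~ big A.
Proof. by move=> sA; rewrite /big sA andbF. Qed.


Lemma ApJ (H : {group gT}) x : (H : {set gT}) \in Ap G p -> x \in G ->
  H :^ x \in Ap G p.
Proof.
rewrite !ApE => /and3P [HG aH nH] xG.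
by rewrite /= abelemJ aH conjsg_eq1 nH -(conjGid xG) conjSg HG.
Qed.

Lemma ApJs A x : A \in Ap G p -> x \in G -> A :^ x \in Ap G p.
Proof. move=> AAp xG; have [H eH] := ApP AAp; rewrite eH in AAp *; exact: ApJ AAp xG. Qed.

Lemma smallJ1 A x : x \in G -> small A -> small (A :^ x).
Proof.
move=> xG sA; rewrite /small ApJs ?smallAp //=.
apply/forall_inP => B BAp; apply/implyP => BAx.
have h : B :^ x^-1 = A.
  apply: (smallP sA); first by apply: ApJs => //; rewrite groupV.
  by rewrite sub_conjgV.
by rewrite -h conjsgKV.
Qed.

Lemma smallJ A x : x \in G -> small (A :^ x) = small A.
Proof.
move=> xG; apply/idP/idP; last exact: smallJ1.
move=> h; have := smallJ1 (groupVr xG) h; by rewrite conjsgK.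
Qed.

Lemma ApJE A x : x \in G -> (A :^ x \in Ap G p) = (A \in Ap G p).
Proof.
move=> xG; apply/idP/idP => h; last exact: ApJs.
have := ApJs h (groupVr xG); by rewrite conjsgK.
Qed.

Lemma bigJ A x : x \in G -> big (A :^ x) = big A.
Proof. by move=> xG; rewrite /big smallJ // ApJE. Qed.

Lemma ApM (H K : {group gT}) : (H : {set gT}) \in Ap G p -> (K : {set gT}) \in Ap G p ->
  K \subset 'C(H) -> H <*> K \in Ap G p.
Proof.
rewrite !ApE => /and3P [HG aH nH] /and3P [KG aK nK] cHK.
rewrite /= join_subG HG KG /= (cprod_abelem p (cprodEY cHK)) aH aK /=.
apply: contra nH => /eqP e; rewrite -subG1 -e; exact: joing_subl.
Qed.

Lemma min_small A : A \in Ap G p -> exists2 X : {group gT}, small X & X \subset A.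
Proof.
move=> AAp.
pose P := [pred B | (B \in Ap G p) && (B \subset A)].
have PA : P A by rewrite /P /= AAp subxx.
case: (arg_minnP (fun B : {set gT} => #|B|) PA) => X /andP [XAp XA] Xmin.
have [H eH] := ApP XAp; exists H; rewrite -eH //.
rewrite /small XAp /=; apply/forall_inP => B BAp; apply/implyP => BX.
have := Xmin B; rewrite /P /= BAp (subset_trans BX XA) => /(_ isT) le.
by rewrite eqEcard BX le.
Qed.

Lemma two_small (X Y : {group gT}) : small X -> small Y -> X :!=: Y ->
  Y \subset 'C(X) -> big (X <*> Y)%G.
Proof.
move=> sX sY nXY cXY.
have M := ApM (smallAp sX) (smallAp sY) cXY.
rewrite /big M /=; apply/negP => sM.
have e := smallP sM (smallAp sX) (joing_subl X Y).
have YX : (Y : {set gT}) \subset X by rewrite e joing_subr.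
by move: nXY; rewrite (smallP sX (smallAp sY) YX) eqxx.
Qed.

Lemma Sylow_nt (S : {group gT}) : p.-Sylow(G) S -> S :!=: 1.
Proof.
move=> sylS; apply/negP => /eqP S1.
have := card_Hall sylS; rewrite S1 cards1 => /esym/eqP.
rewrite p_part_eq1 mem_primes pr cardG_gt0 pG.
by [].
Qed.

Lemma cent_small_exists (S : {group gT}) : p.-Sylow(G) S ->
  exists X : {group gT}, [/\ small X, (X : {set gT}) \subset S & S \subset 'C(X)].
Proof.
move=> sylS.
have pS := pHall_pgroup sylS.
have SG := pHall_sub sylS.
have Z1 : 'Z(S) != 1 by rewrite (center_nil_eq1 (pgroup_nil pS)) Sylow_nt.
have pZ : p.-group 'Z(S) := pgroupS (center_sub S) pS.
have [_ pZd _] := pgroup_pdiv pZ Z1.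
have [z zZ oz] := Cauchy pr pZd.
have zS : z \in S by apply: (subsetP (center_sub S)).
have YAp : ((<[z]>)%G : {set gT}) \in Ap G p.
  rewrite ApE /= cycle_subG (subsetP SG) //= cycle_abelem ?pr ?orbT // oz dvdnn /=.
  by rewrite cycle_eq1 -order_eq1 oz; apply/eqP => p1; move: pr; rewrite p1.
have [X sX XY] := min_small YAp.
exists X; split=> //.
  by apply: subset_trans XY _; rewrite cycle_subG.
rewrite centsC; apply: subset_trans XY _; rewrite cycle_subG.
by move: zZ; rewrite /center inE => /andP [].
Qed.

Definition rootType A := small A &&
  [exists S : {group gT}, [&& p.-Sylow(G) S, A \subset S & S \subset 'C(A)]].

Definition caseII := forall S : {group gT}, p.-Sylow(G) S ->
  forall F : {group gT}, (F : {set gT}) \in Ap G p -> F \subset S -> S \subset 'C(F) -> small F.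

Definition caseI := exists S0 F0 : {group gT},
  [/\ p.-Sylow(G) S0, big F0, (F0 : {set gT}) \subset S0 & S0 \subset 'C(F0)].

Lemma caseI_or_II : caseI \/ caseII.
Proof.
case: (boolP [exists S0 : {group gT}, exists F0 : {group gT},
  [&& p.-Sylow(G) S0, big F0, (F0 : {set gT}) \subset S0 & S0 \subset 'C(F0)]]).
  move=> /existsP [S0 /existsP [F0 /and4P [h1 h2 h3 h4]]]; left; by exists S0, F0.
move=> h; right => S sylS F FAp FS SF; apply/negPn/negP => nsF.
move: h; apply/negP/negPn/existsP; exists S; apply/existsP; exists F.
by rewrite sylS /big FAp nsF FS SF.
Qed.

Lemma rootJ1 A x : x \in G -> rootType A -> rootType (A :^ x).
Proof.
move=> xG /andP [sA /existsP [S /and3P [sylS AS SA]]].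
rewrite /rootType smallJ // sA /=; apply/existsP; exists (S :^ x)%G.
by rewrite /= pHallJ // sylS conjSg AS centJ conjSg SA.
Qed.

Lemma rootJ A x : x \in G -> rootType (A :^ x) = rootType A.
Proof.
move=> xG; apply/idP/idP; last exact: rootJ1.
move=> h; have := rootJ1 (groupVr xG) h; by rewrite conjsgK.
Qed.

Lemma centY_sub (X Y : {group gT}) (S : {set gT}) :
  S \subset 'C(X) -> S \subset 'C(Y) -> S \subset 'C(X <*> Y).
Proof. by move=> h1 h2; rewrite centY subsetI h1 h2. Qed.

Lemma II_unique (S X Y : {group gT}) : caseII -> p.-Sylow(G) S -> small X -> small Y ->
  (X : {set gT}) \subset S -> S \subset 'C(X) -> (Y : {set gT}) \subset S -> S \subset 'C(Y) ->
  X :=: Y.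
Proof.
move=> cII sylS sX sY XS SX YS SY; apply/eqP/negPn/negP => nXY.
have bF := two_small sX sY nXY (subset_trans YS SX).
have := cII S sylS (X <*> Y)%G (bigAp bF).
rewrite /= join_subG XS YS centY_sub // => /(_ isT isT) sF.
by move: bF; rewrite /big sF andbF.
Qed.

Lemma root_conj (S0 X0 : {group gT}) W : caseII -> p.-Sylow(G) S0 -> small X0 ->
  (X0 : {set gT}) \subset S0 -> S0 \subset 'C(X0) -> rootType W ->
  exists2 g, g \in G & W = X0 :^ g.
Proof.
move=> cII sylS0 sX0 X0S0 S0X0 /andP [sW /existsP [S /and3P [sylS WS SW]]].
have [g gG eS] := Sylow_trans sylS0 sylS.
have [H eH] := ApP (smallAp sW); rewrite eH in sW WS SW *.
exists g => //.
apply: (II_unique cII sylS sW (X := H) (Y := (X0 :^ g)%G)) => //=.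
- by rewrite smallJ.
- by rewrite eS conjSg.
- by rewrite eS centJ conjSg.
Qed.

Lemma big_central_eq (B F T : {group gT}) : big B -> big F ->
  (B : {set gT}) \subset T -> T \subset 'C(F) -> B :=: F.
Proof.
move=> bB bF BT TF.
have cFB : (F : {set gT}) \subset 'C(B) by rewrite centsC (subset_trans BT TF).
have M := ApM (bigAp bB) (bigAp bF) cFB.
have e1 := big_max bB M (joing_subl B F).
have e2 := big_max bF M (joing_subr B F).
by rewrite -e1 e2.
Qed.

Lemma edge_unique_small (A B1 B2 : {group gT}) :
  small A -> big B1 -> big B2 -> (A : {set gT}) \subset B1 -> (A : {set gT}) \subset B2 ->
  caseI \/ ~~ rootType A ->
  exists2 c, c \in G & (A :^ c = A /\ (B2 : {set gT}) = B1 :^ c).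
Proof.
move=> sA bB1 bB2 AB1 AB2 hcase.
set CA := 'C_G(A).
have BCA : forall B : {group gT}, big B -> (A : {set gT}) \subset B -> B \subset CA.
  move=> B bB AB; have := bigAp bB; rewrite ApE => /and3P [BG aB _].
  by rewrite subsetI BG sub_abelian_cent // (abelem_abelian aB).
have pB : forall B : {group gT}, big B -> p.-group B.
  by move=> B bB; have := bigAp bB; rewrite ApE => /and3P [_ aB _]; exact: abelem_pgroup aB.
have [T sylT B1T] := Sylow_superset (BCA _ bB1 AB1) (pB _ bB1).
have [T2 sylT2 B2T2] := Sylow_superset (BCA _ bB2 AB2) (pB _ bB2).
have [c cCA eT2] := Sylow_trans sylT sylT2.
have TCA := pHall_sub sylT.
have TG : T \subset G by apply: subset_trans TCA (subsetIl _ _).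
have TcA : T \subset 'C(A) by apply: subset_trans TCA (subsetIr _ _).
have AT : (A : {set gT}) \subset T by apply: subset_trans AB1 B1T.
have pT := pHall_pgroup sylT.
have [S' sylS' TS'] := Sylow_superset TG pT.
have S'G := pHall_sub sylS'.
have key : forall Y : {group gT}, (Y : {set gT}) \subset S' -> S' \subset 'C(Y) ->
    (Y : {set gT}) \subset T /\ T \subset 'C(Y).
  move=> Y YS SY; split; last exact: subset_trans TS' SY.
  have PT : (S' :&: CA)%G :=: T.
    apply: (sub_pHall sylT) => /=; first exact: pgroupS (subsetIl _ _) (pHall_pgroup sylS').
      by rewrite subsetI TS' TCA.
    exact: subsetIr.
  rewrite -PT /= subsetI YS subsetI (subset_trans YS S'G) /=.
  by rewrite centsC (subset_trans AT (subset_trans TS' SY)).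
have [F [bF FT TF]] : exists F : {group gT}, [/\ big F, (F : {set gT}) \subset T & T \subset 'C(F)].
  case: hcase => [[S0 [F0 [sylS0 bF0 F0S0 S0F0]]]|nrA].
    have [h hG eS'] := Sylow_trans sylS0 sylS'.
    have YS : ((F0 :^ h)%G : {set gT}) \subset S' by rewrite /= eS' conjSg.
    have SY : S' \subset 'C((F0 :^ h)%G) by rewrite /= eS' centJ conjSg.
    have [Y1 Y2] := key _ YS SY.
    by exists (F0 :^ h)%G; rewrite /= bigJ // Y1 Y2.
  have [X [sX XS SX]] := cent_small_exists sylS'.
  have [XT TX] := key X XS SX.
  have nAX : A :!=: X.
    apply/negP => /eqP eAX; move/negP: nrA; apply; rewrite /rootType sA /=; apply/existsP.
    by exists S'; rewrite sylS' eAX XS SX.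
  exists (A <*> X)%G; split.
  - by apply: two_small => //; apply: subset_trans XT TcA.
  - by rewrite /= join_subG AT XT.
  - exact: centY_sub.
have e1 := big_central_eq bB1 bF B1T TF.
have cG : c \in G by move: cCA; rewrite inE => /andP [].
have cC : c \in 'C(A) by move: cCA; rewrite inE => /andP [].
have e2 : B2 :^ c^-1 :=: F.
  apply: (big_central_eq (B := (B2 :^ c^-1)%G) _ bF _ TF) => /=.
    by rewrite bigJ // groupV.
  by rewrite sub_conjgV -eT2.
exists c => //; split; first by apply/normP; apply: (subsetP (cent_sub A)).
by rewrite e1 -e2 conjsgKV.
Qed.

Lemma normQB (B Q : {group gT}) : big B -> (B : {set gT}) \subset Q -> Q \subset 'C(B) ->
  G :&: 'N(Q) \subset 'N(B).
Proof.
move=> bB BQ QB; apply/subsetP => g /setIP [gG gN].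
rewrite inE.
have BgQ : B :^ g \subset Q by rewrite -(normP gN) conjSg.
have BgAp : ((B :^ g)%G : {set gT}) \in Ap G p by apply: ApJ => //; exact: bigAp.
have M := ApM (bigAp bB) BgAp (subset_trans BgQ QB).
have e := big_max bB M (joing_subl _ _).
by move: e => /= e; have := joing_subr (B : {set gT}) (B :^ g); rewrite e.
Qed.

Lemma big_in_Sylow_norm (B R : {group gT}) : big B -> p.-Sylow('N_G(B)) R -> (B : {set gT}) \subset R.
Proof.
move=> bB sylR.
have := bigAp bB; rewrite ApE => /and3P [BG aB _].
apply: (normal_sub_max_pgroup (pi := p) (G := 'N_G(B)%G)).
- by rewrite max_pgroup_Sylow.
- exact: abelem_pgroup aB.
- exact: normalSG.
Qed.

Lemma step2 (B R S1 S2 W1 W2 : {group gT}) : caseII -> big B -> p.-Sylow('N_G(B)) R ->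
  p.-Sylow(G) S1 -> p.-Sylow(G) S2 -> R \subset S1 -> R \subset S2 ->
  small W1 -> small W2 -> (W1 : {set gT}) \subset B -> (W2 : {set gT}) \subset B ->
  S1 \subset 'C(W1) -> S2 \subset 'C(W2) -> W1 :=: W2.
Proof.
move=> cII bB sylR sylS1 sylS2 RS1 RS2 sW1 sW2 W1B W2B S1W1 S2W2.
apply/eqP/negPn/negP => nW.
have aB : abelian B.
  by have := bigAp bB; rewrite ApE => /and3P [_ aB _]; exact: abelem_abelian aB.
have bW := two_small sW1 sW2 nW (sub_abelian_cent2 aB W2B W1B).
have eB : (B : {set gT}) = W1 <*> W2.
  by apply: (big_max bW (bigAp bB)); rewrite /= join_subG W1B W2B.
have BR := big_in_Sylow_norm bB sylR.
have RB : R \subset 'C(B).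
  by rewrite eB centY_sub // ?(subset_trans RS1 S1W1) ?(subset_trans RS2 S2W2).
have pS1 := pHall_pgroup sylS1.
have S1G := pHall_sub sylS1.
have MN : 'N_S1(R) \subset 'N_G(B).
  rewrite subsetI; apply/andP; split.
    by apply: subset_trans (subsetIl _ _) S1G.
  apply: subset_trans (normQB bB BR RB).
  by apply: setSI.
have eM : 'N_S1(R)%G :=: R.
  apply: (sub_pHall sylR) => //=.
  - exact: pgroupS (subsetIl _ _) pS1.
  - by rewrite subsetI RS1 normG.
have MR : 'N_S1(R) \subset R by move: eM => /= ->.
have eS := nilpotent_sub_norm (pgroup_nil pS1) RS1 MR.
have sB := cII S1 sylS1 B (bigAp bB) (subset_trans BR RS1).
move: bB; rewrite /big sB ?andbF //.
by rewrite eS.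
Qed.


Lemma step1 (B W : {group gT}) : caseII -> big B -> rootType W -> (W : {set gT}) \subset B ->
  exists R S' : {group gT},
    [/\ p.-Sylow('N_G(B)) R, p.-Sylow(G) S', R \subset S' & S' \subset 'C(W)].
Proof.
move=> cII bB rW WB.
have := bigAp bB; rewrite ApE => /and3P [BG aB _].
have abB := abelem_abelian aB.
have pB := abelem_pgroup aB.
have BCB : (B : {set gT}) \subset 'C_G(B) by rewrite subsetI BG; exact: abB.
have [Q sylQ BQ] := Sylow_superset BCB pB.
have QCB := pHall_sub sylQ.
have QG : Q \subset G by apply: subset_trans QCB (subsetIl _ _).
have QcB : Q \subset 'C(B) by apply: subset_trans QCB (subsetIr _ _).
have pQ := pHall_pgroup sylQ.
case/andP: rW => sW /existsP [S0 /and3P [sylS0 WS0 S0W]].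
have S0G := pHall_sub sylS0.
have S0CW : S0 \subset 'C_G(W) by rewrite subsetI S0G S0W.
have QCW : Q \subset 'C_G(W) by rewrite subsetI QG (subset_trans QcB (centS WB)).
have [T sylT QT] := Sylow_superset QCW pQ.
have sylS0CW := pHall_subl S0CW (subsetIl G 'C(W)) sylS0.
have [c cCW eT] := Sylow_trans sylS0CW sylT.
have cG : c \in G by move: cCW; rewrite inE => /andP [].
have sylTG : p.-Sylow(G) T by rewrite eT pHallJ.
have TCW := pHall_sub sylT.
have TG : T \subset G by apply: subset_trans TCW (subsetIl _ _).
have TcW : T \subset 'C(W) by apply: subset_trans TCW (subsetIr _ _).
have pT := pHall_pgroup sylT.
have MN : 'N_T(Q) \subset 'N_G(B).
  rewrite subsetI; apply/andP; split.
    by apply: subset_trans (subsetIl _ _) TG.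
  apply: subset_trans (normQB bB BQ QcB).
  by apply: setSI.
have pM : p.-group 'N_T(Q) by apply: pgroupS (subsetIl _ _) pT.
have [R sylR MR] := Sylow_superset MN pM.
have RN := pHall_sub sylR.
have RG : R \subset G by apply: subset_trans RN (subsetIl _ _).
have [S' sylS' RS'] := Sylow_superset RG (pHall_pgroup sylR).
have [X [sX XS' S'X]] := cent_small_exists sylS'.
have QM : Q \subset 'N_T(Q) by rewrite subsetI QT normG.
have BR : (B : {set gT}) \subset R by apply: subset_trans BQ (subset_trans QM MR).
have XcB : (X : {set gT}) \subset 'C(B).
  by rewrite centsC; apply: subset_trans BR (subset_trans RS' S'X).
have XB : (X : {set gT}) \subset B.
  have M := ApM (bigAp bB) (smallAp sX) XcB.
  have e := big_max bB M (joing_subl _ _).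
  by move: e => /= e; have := joing_subr (B : {set gT}) X; rewrite e.
have eXW : X :=: W.
  apply/eqP/negPn/negP => nXW.
  have nWX : W :!=: X by rewrite eq_sym.
  have bWX := two_small sW sX nWX (sub_abelian_cent2 abB XB WB).
  have eB : (B : {set gT}) = W <*> X.
    by apply: (big_max bWX (bigAp bB)); rewrite /= join_subG WB XB.
  have McB : 'N_T(Q) \subset 'C(B).
    rewrite eB centY_sub //.
      by apply: subset_trans (subsetIl _ _) TcW.
    by apply: subset_trans MR (subset_trans RS' S'X).
  have eMQ : 'N_T(Q)%G :=: Q.
    apply: (sub_pHall sylQ) => //=.
    by rewrite subsetI (subset_trans (subsetIl _ _) TG) McB.
  have MQ : 'N_T(Q) \subset Q by move: eMQ => /= ->.
  have eTQ := nilpotent_sub_norm (pgroup_nil pT) QT MQ.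
  have sB := cII T sylTG B (bigAp bB) (subset_trans BQ QT).
  by move: bB; rewrite /big sB ?andbF // eTQ.
exists R, S'; split=> //.
by rewrite -eXW.
Qed.

Lemma edge_unique_root (B W1 W2 : {group gT}) : caseII -> big B ->
  rootType W1 -> rootType W2 -> (W1 : {set gT}) \subset B -> (W2 : {set gT}) \subset B ->
  exists2 n, n \in G & (B :^ n = B /\ W1 :^ n = W2).
Proof.
move=> cII bB rW1 rW2 W1B W2B.
have [R1 [S1 [sylR1 sylS1 RS1 S1W1]]] := step1 cII bB rW1 W1B.
have [R2 [S2 [sylR2 sylS2 RS2 S2W2]]] := step1 cII bB rW2 W2B.
have [n nN eR] := Sylow_trans sylR1 sylR2.
have nG : n \in G by move: nN; rewrite inE => /andP [].
have nB : n \in 'N(B) by move: nN; rewrite inE => /andP [].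
have eB : B :^ n = B by apply/normP.
exists n => //; split => //.
have sW1 := andP rW1; have sW2 := andP rW2.
apply: (step2 (R := R2) (S1 := (S1 :^ n)%G) (S2 := S2) (W1 := (W1 :^ n)%G) cII bB) => //=.
- by rewrite pHallJ.
- by rewrite eR conjSg.
- by rewrite smallJ //; case: sW1.
- by case: sW2.
- by rewrite -eB conjSg.
- by rewrite centJ conjSg.
Qed.

Lemma Ap_Sylow (A : {group gT}) : (A : {set gT}) \in Ap G p ->
  exists S : {group gT}, p.-Sylow(G) S /\ (A : {set gT}) \subset S.
Proof.
rewrite ApE => /and3P [AG aA _].
have [S sylS AS] := Sylow_superset AG (abelem_pgroup aA).
by exists S.
Qed.

Lemma big_has_root (B : {group gT}) : big B ->
  exists W : {group gT}, rootType W /\ (W : {set gT}) \subset B.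
Proof.
move=> bB; have [S [sylS BS]] := Ap_Sylow (bigAp bB).
have [X [sX XS SX]] := cent_small_exists sylS.
have XcB : (X : {set gT}) \subset 'C(B) by rewrite centsC (subset_trans BS SX).
have M := ApM (bigAp bB) (smallAp sX) XcB.
have e := big_max bB M (joing_subl _ _).
exists X; split.
  by rewrite /rootType sX /=; apply/existsP; exists S; rewrite sylS XS SX.
by move: e => /= e; have := joing_subr (B : {set gT}) X; rewrite e.
Qed.

Lemma small_has_big (A : {group gT}) : small A -> caseI \/ ~~ rootType A ->
  exists B : {group gT}, big B /\ (A : {set gT}) \subset B.
Proof.
move=> sA hc; have [S [sylS AS]] := Ap_Sylow (smallAp sA).
case: hc => [[S0 [F0 [sylS0 bF0 F0S0 S0F0]]]|nrA].
  have [h hG eS] := Sylow_trans sylS0 sylS.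
  have bF : big (F0 :^ h)%G by rewrite /= bigJ.
  have SF : S \subset 'C((F0 :^ h)%G) by rewrite /= eS centJ conjSg.
  have AcF : ((F0 :^ h)%G : {set gT}) \subset 'C(A) by rewrite centsC (subset_trans AS SF).
  have M := ApM (smallAp sA) (bigAp bF) AcF.
  have e := big_max bF M (joing_subr _ _).
  exists (F0 :^ h)%G; split=> //.
  by move: e => /= e; have := joing_subl (A : {set gT}) (F0 :^ h); rewrite e.
have [X [sX XS SX]] := cent_small_exists sylS.
have nAX : A :!=: X.
  apply/negP => /eqP eAX; move/negP: nrA; apply; rewrite /rootType sA /=; apply/existsP.
  by exists S; rewrite sylS eAX XS SX.
exists (A <*> X)%G; split; last exact: joing_subl.
by apply: two_small => //; rewrite centsC (subset_trans AS SX).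
Qed.

Lemma caseI_big_conj (S0 F0 B : {group gT}) : p.-Sylow(G) S0 -> big F0 ->
  (F0 : {set gT}) \subset S0 -> S0 \subset 'C(F0) -> big B ->
  exists2 h, h \in G & (B : {set gT}) = F0 :^ h.
Proof.
move=> sylS0 bF0 F0S0 S0F0 bB.
have [S [sylS BS]] := Ap_Sylow (bigAp bB).
have [h hG eS] := Sylow_trans sylS0 sylS.
have bF : big (F0 :^ h)%G by rewrite /= bigJ.
have SF : S \subset 'C((F0 :^ h)%G) by rewrite /= eS centJ conjSg.
exists h => //.
by have := big_central_eq bB bF BS SF.
Qed.

Notation orb := (chain_orbit G).
Notation D := (Ap_orbits G p).
Notation chains := (Ap_chains G p).

Lemma cconj1 (c : {set {set gT}}) : chain_conj c 1 = c.
Proof. by rewrite /chain_conj (eq_imset _ (@conjsg1 gT)) imset_id. Qed.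

Lemma cconjM (c : {set {set gT}}) x y : chain_conj (chain_conj c x) y = chain_conj c (x * y).
Proof.
rewrite /chain_conj -imset_comp; apply: eq_imset => A /=; by rewrite conjsgM.
Qed.

Lemma cconj_set1 (A : {set gT}) x : chain_conj [set A] x = [set A :^ x].
Proof. by rewrite /chain_conj imset_set1. Qed.

Lemma cconj_set2 (A B : {set gT}) x : chain_conj [set A; B] x = [set A :^ x; B :^ x].
Proof. by rewrite /chain_conj imsetU1 imset_set1. Qed.

Lemma card_cconj (c : {set {set gT}}) x : #|chain_conj c x| = #|c|.
Proof. by rewrite /chain_conj card_imset //; apply: conjsg_inj. Qed.

Lemma exists_cconj (Q : pred {set gT}) (c : {set {set gT}}) x :
  (forall A, Q (A :^ x) = Q A) ->
  [exists A in chain_conj c x, Q A] = [exists A in c, Q A].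
Proof.
move=> hQ; apply/existsP/existsP => [[A /andP [/imsetP [B Bc ->] QA]]|[A /andP [Ac QA]]].
  by exists B; rewrite Bc -hQ.
by exists (A :^ x); rewrite hQ QA andbT; apply: imset_f.
Qed.

Lemma mem_orb (c : {set {set gT}}) : c \in orb c.
Proof. by apply/imsetP; exists 1; rewrite ?group1 ?cconj1. Qed.

Lemma orb_conj (c : {set {set gT}}) x : x \in G -> orb (chain_conj c x) = orb c.
Proof.
move=> xG; apply/setP => d; apply/imsetP/imsetP => [[y yG ->]|[y yG ->]].
  by exists (x * y); rewrite ?groupM // cconjM.
by exists (x^-1 * y); rewrite ?groupM ?groupV // cconjM mulKVg.
Qed.

Lemma orb_mem (c d : {set {set gT}}) : d \in orb c -> orb d = orb c.
Proof. by case/imsetP => x xG ->; apply: orb_conj. Qed.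

Lemma le_orbP (c d : {set {set gT}}) :
  reflect (exists2 g, g \in G & chain_conj c g \subset d) (orbit_le (orb c) (orb d)).
Proof.
apply: (iffP existsP) => [[c' /andP [/imsetP [x xG ->] /existsP [d' /andP [/imsetP [y yG ->] sub]]]]|[g gG sub]].
  exists (x * y^-1); first by rewrite groupM ?groupV.
  have := imsetS (fun A => A :^ y^-1) sub; rewrite -/(chain_conj _ _) -/(chain_conj _ _).
  by rewrite !cconjM mulgV cconj1.
exists (chain_conj c g); rewrite (imset_f _ gG) /=.
by apply/existsP; exists d; rewrite mem_orb.
Qed.

Lemma orb_eqP (c d : {set {set gT}}) :
  reflect (exists2 g, g \in G & chain_conj c g = d) (orb c == orb d).
Proof.
apply: (iffP eqP) => [e|[g gG <-]]; last by rewrite orb_conj.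
have : d \in orb c by rewrite e mem_orb.
by case/imsetP => g gG ->; exists g.
Qed.

Lemma sing_chain (A : {set gT}) : A \in Ap G p -> [set A] \in chains.
Proof.
move=> AAp; rewrite inE sub1set AAp /= -card_gt0 cards1 /=.
by apply/forall_inP => X /set1P -> ; apply/forall_inP => Y /set1P ->; rewrite subxx.
Qed.

Lemma pair_chain (A B : {set gT}) : A \in Ap G p -> B \in Ap G p -> A \subset B ->
  [set A; B] \in chains.
Proof.
move=> AAp BAp AB; rewrite inE.
apply/and3P; split.
- by apply/subsetP => X /set2P [->|->].
- by apply/set0Pn; exists A; rewrite set21.
apply/forall_inP => X /set2P [->|->]; apply/forall_inP => Y /set2P [->|->];
  by rewrite ?subxx ?AB ?orbT.
Qed.

Lemma proper_neq (X Y : {set gT}) : X \subset Y -> X != Y -> X \proper Y.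
Proof. by move=> XY nXY; rewrite properEneq nXY XY. Qed.

Lemma chain_shape c : c \in chains ->
  (exists A, A \in Ap G p /\ c = [set A]) \/
  (exists A B, [/\ small A, big B, A \proper B & c = [set A; B]]).
Proof.
rewrite inE => /and3P [cAp /set0Pn [A Ac] /forall_inP tot].
have inAp : forall X, X \in c -> X \in Ap G p by move=> X Xc; apply: (subsetP cAp).
have cmp : forall X Y, X \in c -> Y \in c -> (X \subset Y) || (Y \subset X).
  by move=> X Y Xc Yc; have := tot X Xc => /forall_inP /(_ Y Yc).
case: (boolP (c \subset [set A])) => [sc|].
  left; exists A; split; first exact: inAp.
  by apply/eqP; rewrite eqEsubset sc sub1set Ac.
case/subsetPn => B Bc; rewrite inE => nBA.
have [A1 [B1 [A1c B1c pAB]]] : exists A1 B1, [/\ A1 \in c, B1 \in c & A1 \proper B1].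
  case/orP: (cmp A B Ac Bc) => h.
    by exists A, B; split=> //; apply: proper_neq; rewrite // eq_sym.
  by exists B, A; split=> //; apply: proper_neq.
right; exists A1, B1.
have A1Ap := inAp _ A1c; have B1Ap := inAp _ B1c.
have sA1 : small A1.
  rewrite /small A1Ap /=; apply/forall_inP => X XAp; apply/implyP => XA.
  apply/negPn/negP => nXA; exact: (no3 XAp A1Ap B1Ap (proper_neq XA nXA) pAB).
have bB1 : big B1.
  rewrite /big B1Ap /=; apply/negP => sB.
  have e := smallP sB A1Ap (proper_sub pAB).
  by move: pAB; rewrite e properxx.
split=> //.
apply/eqP; rewrite eqEsubset; apply/andP; split; last first.
  by apply/subsetP => X /set2P [->|->].
apply/subsetP => C Cc; apply/set2P.
case: (boolP (C == A1)) => [/eqP ->|nCA]; first by left.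
case: (boolP (C == B1)) => [/eqP ->|nCB]; first by right.
exfalso; have CAp := inAp _ Cc.
case/orP: (cmp C A1 Cc A1c) => h1.
  exact: (no3 CAp A1Ap B1Ap (proper_neq h1 nCA) pAB).
case/orP: (cmp C B1 Cc B1c) => h2.
  by apply: (no3 A1Ap CAp B1Ap _ (proper_neq h2 nCB)); apply: proper_neq; rewrite // eq_sym.
by apply: (no3 A1Ap B1Ap CAp pAB); apply: proper_neq; rewrite // eq_sym.
Qed.

Definition oP (P : {set {set gT}} -> bool) (o : {set {set {set gT}}}) := [exists c in o, P c].

Lemma oP_orb (P : {set {set gT}} -> bool) c :
  (forall c x, x \in G -> P (chain_conj c x) = P c) -> oP P (orb c) = P c.
Proof.
move=> hP; apply/existsP/idP => [[c' /andP [/imsetP [x xG ->]]]|Pc].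
  by rewrite hP.
by exists c; rewrite mem_orb.
Qed.

Definition sing (c : {set {set gT}}) := #|c| == 1%nat.
Definition hasRoot (c : {set {set gT}}) := [exists A in c, rootType A].
Definition hasBig (c : {set {set gT}}) := [exists A in c, big A].

Lemma singJ c x : x \in G -> sing (chain_conj c x) = sing c.
Proof. by move=> _; rewrite /sing card_cconj. Qed.
Lemma hasRootJ c x : x \in G -> hasRoot (chain_conj c x) = hasRoot c.
Proof. by move=> xG; rewrite /hasRoot exists_cconj // => A; rewrite rootJ. Qed.
Lemma hasBigJ c x : x \in G -> hasBig (chain_conj c x) = hasBig c.
Proof. by move=> xG; rewrite /hasBig exists_cconj // => A; rewrite bigJ. Qed.

Lemma exists_set1 (Q : pred {set gT}) A : [exists X in [set A], Q X] = Q A.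
Proof.
apply/existsP/idP => [[X /andP [/set1P -> //]]|QA]; by exists A; rewrite set11.
Qed.

Lemma exists_set2 (Q : pred {set gT}) A B : [exists X in [set A; B], Q X] = Q A || Q B.
Proof.
apply/existsP/orP => [[X /andP [/set2P [->|->] QX]]|[QA|QB]]; [by left|by right| |].
  by exists A; rewrite set21.
by exists B; rewrite set22.
Qed.

Lemma root_small A : rootType A -> small A. Proof. by case/andP. Qed.
Lemma big_not_root B : big B -> ~~ rootType B.
Proof. by move=> bB; apply/negP => /root_small /small_not_big; rewrite bB. Qed.

Lemma small_neq_big A B : small A -> big B -> A != B.
Proof. by move=> sA bB; apply/eqP => e; move: (small_not_big sA); rewrite e bB. Qed.

Definition depII (o : {set {set {set gT}}}) : nat :=
  if oP (fun c => sing c && hasRoot c) o then 0%nat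
  else if oP hasRoot o then 1%nat
  else if oP (fun c => sing c && hasBig c) o then 2%nat
  else if oP (fun c => ~~ sing c) o then 3%nat else 4%nat.

Lemma depII_orb c : depII (orb c) =
  if sing c && hasRoot c then 0%nat else if hasRoot c then 1%nat
  else if sing c && hasBig c then 2%nat else if ~~ sing c then 3%nat else 4%nat.
Proof.
rewrite /depII !oP_orb // => d x xG; by rewrite ?singJ ?hasRootJ ?hasBigJ.
Qed.

Lemma sing1 (A : {set gT}) : sing [set A]. Proof. by rewrite /sing cards1. Qed.
Lemma sing2 (A B : {set gT}) : A != B -> sing [set A; B] = false.
Proof. by move=> nAB; rewrite /sing cards2 nAB. Qed.

Lemma depII_root A : rootType A -> depII (orb [set A]) = 0%nat.
Proof. by move=> rA; rewrite depII_orb sing1 /hasRoot exists_set1 rA. Qed.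

Lemma depII_rootedge A B : rootType A -> big B -> depII (orb [set A; B]) = 1%nat.
Proof.
move=> rA bB; rewrite depII_orb sing2 ?small_neq_big ?root_small //.
by rewrite /hasRoot exists_set2 rA.
Qed.

Lemma depII_big B : big B -> depII (orb [set B]) = 2%nat.
Proof.
move=> bB; rewrite depII_orb sing1 /hasRoot /hasBig !exists_set1 bB.
by rewrite (negbTE (big_not_root bB)).
Qed.

Lemma depII_edge A B : small A -> ~~ rootType A -> big B -> depII (orb [set A; B]) = 3%nat.
Proof.
move=> sA nrA bB; rewrite depII_orb sing2 ?small_neq_big //.
by rewrite /hasRoot exists_set2 (negbTE nrA) (negbTE (big_not_root bB)).
Qed.

Lemma depII_leaf A : small A -> ~~ rootType A -> depII (orb [set A]) = 4%nat.
Proof.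
move=> sA nrA; rewrite depII_orb sing1 /hasRoot /hasBig !exists_set1 (negbTE nrA).
by rewrite (negbTE (small_not_big sA)).
Qed.

Definition depI (o : {set {set {set gT}}}) : nat :=
  if oP (fun c => sing c && hasBig c) o then 0%nat
  else if oP (fun c => ~~ sing c) o then 1%nat else 2%nat.

Lemma depI_orb c : depI (orb c) =
  if sing c && hasBig c then 0%nat else if ~~ sing c then 1%nat else 2%nat.
Proof. rewrite /depI !oP_orb // => d x xG; by rewrite ?singJ ?hasBigJ. Qed.

Lemma depI_big B : big B -> depI (orb [set B]) = 0%nat.
Proof. by move=> bB; rewrite depI_orb sing1 /hasBig exists_set1 bB. Qed.

Lemma depI_edge A B : small A -> big B -> depI (orb [set A; B]) = 1%nat.
Proof. by move=> sA bB; rewrite depI_orb sing2 ?small_neq_big. Qed.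

Lemma depI_leaf A : small A -> depI (orb [set A]) = 2%nat.
Proof.
by move=> sA; rewrite depI_orb sing1 /hasBig exists_set1 (negbTE (small_not_big sA)).
Qed.

Lemma inD_orb o : o \in D -> exists2 c, c \in chains & o = orb c.
Proof. by case/imsetP => c cc ->; exists c. Qed.

Lemma orbD c : c \in chains -> orb c \in D.
Proof. by move=> cc; apply: imset_f. Qed.

Lemma chain_nonempty c : c \in chains -> 0 < #|c|.
Proof. by rewrite inE card_gt0 => /and3P []. Qed.

Lemma le_cases x y : x \in D -> y \in D -> orbit_le x y ->
  x = y \/ exists A B, [/\ small A, big B, A \proper B, y = orb [set A; B] &
                         (x = orb [set A] \/ x = orb [set B])].
Proof.
move=> /inD_orb [c cc ->] /inD_orb [d dc ->] /le_orbP [g gG sub].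
case: (boolP (chain_conj c g == d)) => [/eqP e|ne].
  by left; apply/eqP/orb_eqP; exists g.
right.
have lt : #|chain_conj c g| < #|d| by apply: proper_card; rewrite properEneq ne sub.
rewrite card_cconj in lt.
have c0 := chain_nonempty cc.
case: (chain_shape dc) => [[A' [_ ed]]|[A [B [sA bB pAB ed]]]].
  by move: lt c0; rewrite ed cards1; case: #|c| => [|[|]].
exists A, B; split=> //; first by rewrite ed.
case: (chain_shape cc) => [[C [_ ec]]|[C1 [C2 [sC1 bC2 _ ec]]]]; last first.
  by move: lt; rewrite ec ed !cards2 !small_neq_big.
rewrite ec cconj_set1 ed sub1set in sub.
rewrite ec -(orb_conj _ gG) cconj_set1.
by case/set2P: sub => ->; [left|right].
Qed.

Lemma leaf_unique (A B : {group gT}) o : small A -> caseI \/ ~~ rootType A ->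
  big B -> (A : {set gT}) \subset B -> o \in D -> orbit_le (orb [set (A : {set gT})]) o ->
  o != orb [set (A : {set gT})] -> o = orb [set (A : {set gT}); (B : {set gT})].
Proof.
move=> sA hc bB AB /inD_orb [d dc ->] /le_orbP [g gG sub] ne.
rewrite cconj_set1 sub1set in sub.
case: (chain_shape dc) => [[A' [_ ed]]|[A' [B' [sA' bB' pAB' ed]]]].
  move: sub; rewrite ed => /set1P e.
  by move: ne; rewrite ed -e -cconj_set1 orb_conj // eqxx.
move: sub; rewrite ed => /set2P [eA|eB]; last first.
  by move: bB'; rewrite -eB bigJ // (negbTE (small_not_big sA)).
have B'Ap := bigAp bB'; have [B'g eB'g] := ApP B'Ap.
have bB2 : big (B'g :^ g^-1)%G by rewrite /= bigJ ?groupV // -eB'g.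
have AB2 : (A : {set gT}) \subset (B'g :^ g^-1)%G.
  by rewrite /= -sub_conjg -eB'g eA (proper_sub pAB').
have [c cG [eAc eBc]] := edge_unique_small sA bB bB2 AB AB2 hc.
apply/esym/eqP/orb_eqP; exists (c * g); first by rewrite groupM.
by rewrite cconj_set2 !conjsgM eAc -eBc /= conjsgKV -eB'g eA.
Qed.

Lemma rootedge_unique (S0 X0 B W : {group gT}) o : caseII -> p.-Sylow(G) S0 -> small X0 ->
  (X0 : {set gT}) \subset S0 -> S0 \subset 'C(X0) -> big B -> rootType W ->
  (W : {set gT}) \subset B -> o \in D -> orbit_le (orb [set (B : {set gT})]) o ->
  orbit_le (orb [set (X0 : {set gT})]) o -> o = orb [set (W : {set gT}); (B : {set gT})].
Proof.
move=> cII sylS0 sX0 X0S0 S0X0 bB rW WB /inD_orb [d dc ->].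
move=> /le_orbP [g gG sub1] /le_orbP [h hG sub2].
rewrite cconj_set1 sub1set in sub1; rewrite cconj_set1 sub1set in sub2.
have rX0 : rootType X0.
  by rewrite /rootType sX0 /=; apply/existsP; exists S0; rewrite sylS0 X0S0 S0X0.
have rX0h : rootType (X0 :^ h) by rewrite rootJ.
have bBg : big (B :^ g) by rewrite bigJ.
case: (chain_shape dc) => [[A' [_ ed]]|[A' [B' [sA' bB' pAB' ed]]]].
  move: sub1 sub2; rewrite ed => /set1P e1 /set1P e2.
  by move: (small_neq_big (root_small rX0h) bBg); rewrite e1 e2 eqxx.
move: sub1 sub2; rewrite ed => /set2P [e1|e1] /set2P [e2|e2].
- by move: (small_neq_big sA' bBg); rewrite e1 eqxx.
- by move: (small_neq_big sA' bBg); rewrite e1 eqxx.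
- have W2B : ((X0 :^ (h * g^-1))%G : {set gT}) \subset B.
    by rewrite /= conjsgM sub_conjgV e1 e2 (proper_sub pAB').
  have rW2 : rootType (X0 :^ (h * g^-1))%G by rewrite /= rootJ // groupM ?groupV.
  have [n nG [eBn eWn]] := edge_unique_root cII bB rW2 rW W2B WB.
  apply/eqP/orb_eqP; exists (g^-1 * n); first by rewrite groupM ?groupV.
  rewrite cconj_set2 -e1 -e2 -!conjsgM mulKVg.
  by rewrite -eWn /= -conjsgM mulgA eBn.
- by move: (small_neq_big (root_small rX0h) bB'); rewrite e2 eqxx.
Qed.

Lemma shape_groups c : c \in chains ->
  (exists A : {group gT}, (A : {set gT}) \in Ap G p /\ c = [set (A : {set gT})]) \/
  (exists A B : {group gT}, [/\ small A, big B, (A : {set gT}) \proper B &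
      c = [set (A : {set gT}); (B : {set gT})]]).
Proof.
case/chain_shape => [[A [AAp ->]]|[A [B [sA bB pAB ->]]]].
  by have [H eH] := ApP AAp; left; exists H; rewrite -eH.
have [HA eA] := ApP (smallAp sA); have [HB eB] := ApP (bigAp bB).
by right; exists HA, HB; rewrite -eA -eB.
Qed.

Definition pickD (r : {set {set {set gT}}}) (P : pred {set {set {set gT}}}) :=
  odflt r [pick o in D | P o].

Lemma pickD_spec r (P : pred {set {set {set gT}}}) : (exists2 o, o \in D & P o) -> pickD r P \in D /\ P (pickD r P).
Proof.
move=> [o oD Po]; rewrite /pickD; case: pickP => [o' /andP [h1 h2]|h] //=.
by move: (h o); rewrite oD Po.
Qed.

Lemma pickD_in r (P : pred {set {set {set gT}}}) : r \in D -> pickD r P \in D.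
Proof. by move=> rD; rewrite /pickD; case: pickP => [o' /andP [h1 h2]|h]. Qed.

Lemma le_refl o : o \in D -> orbit_le o o.
Proof.
by case/inD_orb => c _ ->; apply/le_orbP; exists 1; rewrite ?group1 ?cconj1.
Qed.

Lemma le_sub (c d : {set {set gT}}) : c \subset d -> orbit_le (orb c) (orb d).
Proof. by move=> cd; apply/le_orbP; exists 1; rewrite ?group1 ?cconj1. Qed.

Lemma sub_set1_set2 (A B : {set gT}) : [set A] \subset [set A; B].
Proof. by rewrite sub1set set21. Qed.
Lemma sub_set1_set2r (A B : {set gT}) : [set B] \subset [set A; B].
Proof. by rewrite sub1set set22. Qed.

Section CaseII.
Variables (S0 X0 : {group gT}).
Hypotheses (cII : caseII) (sylS0 : p.-Sylow(G) S0) (sX0 : small X0)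
  (X0S0 : (X0 : {set gT}) \subset S0) (S0X0 : S0 \subset 'C(X0)).

Let r := orb [set (X0 : {set gT})].

Definition parII o :=
  if depII o == 1%nat then r
  else if depII o == 2%nat then pickD r (fun o' => orbit_le o o' && orbit_le r o')
  else if depII o == 3%nat then pickD r (fun o' => orbit_le o' o && (depII o' == 2%nat))
  else if depII o == 4%nat then pickD r (fun o' => orbit_le o o' && (o' != o))
  else r.

Lemma rX0 : rootType X0.
Proof. by rewrite /rootType sX0 /=; apply/existsP; exists S0; rewrite sylS0 X0S0 S0X0. Qed.

Lemma rD : r \in D.
Proof. exact/orbD/sing_chain/smallAp. Qed.

Lemma root_orb (A : {group gT}) : rootType A -> orb [set (A : {set gT})] = r.
Proof.
move=> rA; have [g gG eA] := root_conj cII sylS0 sX0 X0S0 S0X0 rA.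
by rewrite /r eA -cconj_set1 orb_conj.
Qed.

Lemma root_le (A : {group gT}) (c : {set {set gT}}) : rootType A -> (A : {set gT}) \in c -> orbit_le r (orb c).
Proof.
move=> rA Ac; rewrite -(root_orb rA); by apply: le_sub; rewrite sub1set.
Qed.

Lemma classII o : o \in D ->
  [\/ (exists A : {group gT}, rootType A /\ o = orb [set (A : {set gT})]),
      (exists A B : {group gT}, [/\ rootType A, big B, (A : {set gT}) \proper B &
                                  o = orb [set (A : {set gT}); (B : {set gT})]]),
      (exists B : {group gT}, big B /\ o = orb [set (B : {set gT})]) |
      (exists A B : {group gT}, [/\ small A, ~~ rootType A, big B, (A : {set gT}) \proper B &
                                  o = orb [set (A : {set gT}); (B : {set gT})]]) \/
      (exists A : {group gT}, [/\ small A, ~~ rootType A & o = orb [set (A : {set gT})]])].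
Proof.
case/inD_orb => c cc ->; case: (shape_groups cc) => [[A [AAp ->]]|[A [B [sA bB pAB ->]]]].
  case: (boolP (small A)) => sA.
    case: (boolP (rootType A)) => rA.
      by constructor 1; exists A.
    by constructor 4; right; exists A.
  by constructor 3; exists A; rewrite /big AAp sA.
case: (boolP (rootType A)) => rA.
  by constructor 2; exists A, B.
by constructor 4; left; exists A, B.
Qed.

Lemma parII_big (B W : {group gT}) : big B -> rootType W -> (W : {set gT}) \subset B ->
  parII (orb [set (B : {set gT})]) = orb [set (W : {set gT}); (B : {set gT})].
Proof.
move=> bB rW WB; rewrite /parII depII_big //=.
have WAp := smallAp (root_small rW).
have [] := @pickD_spec r (fun o' => orbit_le (orb [set (B : {set gT})]) o' && orbit_le r o').
  exists (orb [set (W : {set gT}); (B : {set gT})]).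
    by apply/orbD/pair_chain => //; exact: bigAp.
  rewrite le_sub ?sub_set1_set2r //=.
  by apply: (root_le rW); rewrite set21.
move=> pD /andP [h1 h2].
exact: (rootedge_unique cII sylS0 sX0 X0S0 S0X0 bB rW WB pD h1 h2).
Qed.

Lemma parII_leaf (A B : {group gT}) : small A -> ~~ rootType A -> big B ->
  (A : {set gT}) \subset B ->
  parII (orb [set (A : {set gT})]) = orb [set (A : {set gT}); (B : {set gT})].
Proof.
move=> sA nrA bB AB; rewrite /parII depII_leaf //=.
have [] := @pickD_spec r (fun o' => orbit_le (orb [set (A : {set gT})]) o' &&
                                     (o' != orb [set (A : {set gT})])).
  exists (orb [set (A : {set gT}); (B : {set gT})]).
    by apply/orbD/pair_chain => //; [exact: smallAp|exact: bigAp].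
  rewrite le_sub ?sub_set1_set2 //=.
  by apply/eqP => e; move: (depII_edge sA nrA bB); rewrite e depII_leaf.
move=> pD /andP [h1 h2].
by apply: (leaf_unique sA _ bB AB pD h1 h2); right.
Qed.

Lemma parII_edge (A B : {group gT}) : small A -> ~~ rootType A -> big B ->
  (A : {set gT}) \subset B ->
  parII (orb [set (A : {set gT}); (B : {set gT})]) = orb [set (B : {set gT})].
Proof.
move=> sA nrA bB AB; rewrite /parII depII_edge //=.
have [] := @pickD_spec r (fun o' => orbit_le o' (orb [set (A : {set gT}); (B : {set gT})]) &&
                                     (depII o' == 2%nat)).
  exists (orb [set (B : {set gT})]).
    by apply/orbD/sing_chain; exact: bigAp.
  by rewrite le_sub ?sub_set1_set2r //= depII_big.
move=> pD /andP [h1 /eqP h2].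
case: (classII pD) => [[A' [rA' e]]|[A' [B' [rA' bB' _ e]]]|[B' [bB' e]]|[[A' [B' [sA' nrA' bB' _ e]]]|[A' [sA' nrA' e]]]];
  rewrite e in h2 h1 *.
- by rewrite depII_root in h2.
- by rewrite depII_rootedge in h2.
- move/le_orbP: h1 => [h hG]; rewrite cconj_set1 sub1set => /set2P [eA|eB].
    have bB'h : big (B' :^ h) by rewrite bigJ.
    by move: (small_neq_big sA bB'h); rewrite eA eqxx.
  by rewrite -eB -cconj_set1 orb_conj.
- by rewrite depII_edge in h2.
- by rewrite depII_leaf in h2.
Qed.

Lemma contr_II : fs_contractible D (@orbit_le gT).
Proof.
have rD' := rD.
apply: (contr_tree (r := r) (par := parII) (dep := depII)) => //.
- exact: le_refl.
- move=> x _; rewrite /parII.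
  by case: ifP => _; [|case: ifP => _; [|case: ifP => _; [|case: ifP => _]]];
     rewrite ?pickD_in.
- by move=> x _; rewrite /depII; case: ifP => _; [|case: ifP => _; [|case: ifP => _; [|case: ifP => _]]].
- move=> x xD; case: (classII xD) => [[A [rA ->]]|[A [B [rA bB _ ->]]]|[B [bB ->]]|[[A [B [sA nrA bB _ ->]]]|[A [sA nrA ->]]]].
  + by move=> _; apply: root_orb.
  + by rewrite depII_rootedge.
  + by rewrite depII_big.
  + by rewrite depII_edge.
  + by rewrite depII_leaf.
- move=> x xD; case: (classII xD) => [[A [rA ->]]|[A [B [rA bB pAB ->]]]|[B [bB ->]]|[[A [B [sA nrA bB pAB ->]]]|[A [sA nrA ->]]]].
  + by rewrite depII_root.
  + rewrite depII_rootedge // /parII depII_rootedge //= => _.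
    exact: (depII_root rX0).
  + rewrite depII_big // => _; have [W [rW WB]] := big_has_root bB.
    by rewrite (parII_big bB rW WB) depII_rootedge.
  + by rewrite depII_edge // => _; rewrite parII_edge // ?depII_big // (proper_sub pAB).
  + rewrite depII_leaf // => _; have [B [bB AB]] := small_has_big sA (or_intror nrA).
    by rewrite (parII_leaf sA nrA bB AB) depII_edge.
- move=> x xD; case: (classII xD) => [[A [rA ->]]|[A [B [rA bB pAB ->]]]|[B [bB ->]]|[[A [B [sA nrA bB pAB ->]]]|[A [sA nrA ->]]]].
  + by rewrite depII_root.
  + rewrite depII_rootedge //= /parII depII_rootedge //= => _.
    by apply: (root_le rA); rewrite set21.
  + rewrite depII_big //= => _; have [W [rW WB]] := big_has_root bB.
    by rewrite (parII_big bB rW WB) le_sub // sub_set1_set2r.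
  + by rewrite depII_edge //= => _; rewrite parII_edge ?(proper_sub pAB) // le_sub // sub_set1_set2r.
  + rewrite depII_leaf //= => _; have [B [bB AB]] := small_has_big sA (or_intror nrA).
    by rewrite (parII_leaf sA nrA bB AB) le_sub // sub_set1_set2.
- move=> x y xD yD xy; case: (le_cases xD yD xy) => [->|[A [B [sA bB pAB ey ex]]]].
    by constructor 1.
  case: (ApP (smallAp sA)) => HA eA; case: (ApP (bigAp bB)) => HB eB; subst A B.
  have AB := proper_sub pAB.
  case: (boolP (rootType HA)) => rA.
    case: ex => ex.
      constructor 2; split; first by rewrite ey depII_rootedge.
      by rewrite /parII ey depII_rootedge //= ex root_orb.
    constructor 3; split; first by rewrite ex depII_big.
    by rewrite ex (parII_big bB rA AB) ey.
  case: ex => ex.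
    constructor 3; split; first by rewrite ex depII_leaf.
    by rewrite ex (parII_leaf sA rA bB AB) ey.
  constructor 2; split; first by rewrite ey depII_edge.
  by rewrite ey parII_edge.
Qed.

End CaseII.

Section CaseI.
Variables (S0 F0 : {group gT}).
Hypotheses (sylS0 : p.-Sylow(G) S0) (bF0 : big F0)
  (F0S0 : (F0 : {set gT}) \subset S0) (S0F0 : S0 \subset 'C(F0)).

Let r := orb [set (F0 : {set gT})].
Let cI : caseI. Proof. by exists S0, F0. Qed.

Definition parI o :=
  if depI o == 2%nat then pickD r (fun o' => orbit_le o o' && (o' != o)) else r.

Lemma rDI : r \in D.
Proof. exact/orbD/sing_chain/bigAp. Qed.

Lemma root_orbI (B : {group gT}) : big B -> orb [set (B : {set gT})] = r.
Proof.
move=> bB; have [h hG eB] := caseI_big_conj sylS0 bF0 F0S0 S0F0 bB.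
by rewrite /r eB -cconj_set1 orb_conj.
Qed.

Lemma classI o : o \in D ->
  [\/ (exists B : {group gT}, big B /\ o = orb [set (B : {set gT})]),
      (exists A B : {group gT}, [/\ small A, big B, (A : {set gT}) \proper B &
                                  o = orb [set (A : {set gT}); (B : {set gT})]]) |
      (exists A : {group gT}, small A /\ o = orb [set (A : {set gT})])].
Proof.
case/inD_orb => c cc ->; case: (shape_groups cc) => [[A [AAp ->]]|[A [B [sA bB pAB ->]]]].
  case: (boolP (small A)) => sA.
    by constructor 3; exists A.
  by constructor 1; exists A; rewrite /big AAp sA.
by constructor 2; exists A, B.
Qed.

Lemma parI_leaf (A B : {group gT}) : small A -> big B -> (A : {set gT}) \subset B ->
  parI (orb [set (A : {set gT})]) = orb [set (A : {set gT}); (B : {set gT})].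
Proof.
move=> sA bB AB; rewrite /parI depI_leaf //=.
have [] := @pickD_spec r (fun o' => orbit_le (orb [set (A : {set gT})]) o' &&
                                     (o' != orb [set (A : {set gT})])).
  exists (orb [set (A : {set gT}); (B : {set gT})]).
    by apply/orbD/pair_chain => //; [exact: smallAp|exact: bigAp].
  rewrite le_sub ?sub_set1_set2 //=.
  by apply/eqP => e; move: (depI_edge sA bB); rewrite e depI_leaf.
move=> pD /andP [h1 h2].
by apply: (leaf_unique sA _ bB AB pD h1 h2); left.
Qed.

Lemma contr_I : fs_contractible D (@orbit_le gT).
Proof.
have rD' := rDI.
apply: (contr_tree (r := r) (par := parI) (dep := depI)) => //.
- exact: le_refl.
- by move=> x _; rewrite /parI; case: ifP => _; rewrite ?pickD_in.
- by move=> x _; rewrite /depI; case: ifP => _; [|case: ifP => _].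
- move=> x xD; case: (classI xD) => [[B [bB ->]]|[A [B [sA bB _ ->]]]|[A [sA ->]]].
  + by move=> _; apply: root_orbI.
  + by rewrite depI_edge.
  + by rewrite depI_leaf.
- move=> x xD; case: (classI xD) => [[B [bB ->]]|[A [B [sA bB pAB ->]]]|[A [sA ->]]].
  + by rewrite depI_big.
  + rewrite depI_edge // /parI depI_edge //= => _.
    exact: (depI_big bF0).
  + rewrite depI_leaf // => _; have [B [bB AB]] := small_has_big sA (or_introl cI).
    by rewrite (parI_leaf sA bB AB) depI_edge.
- move=> x xD; case: (classI xD) => [[B [bB ->]]|[A [B [sA bB pAB ->]]]|[A [sA ->]]].
  + by rewrite depI_big.
  + rewrite depI_edge //= /parI depI_edge //= => _.
    by rewrite -(root_orbI bB) le_sub // sub_set1_set2r.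
  + rewrite depI_leaf //= => _; have [B [bB AB]] := small_has_big sA (or_introl cI).
    by rewrite (parI_leaf sA bB AB) le_sub // sub_set1_set2.
- move=> x y xD yD xy; case: (le_cases xD yD xy) => [->|[A [B [sA bB pAB ey ex]]]].
    by constructor 1.
  case: (ApP (smallAp sA)) => HA eA; case: (ApP (bigAp bB)) => HB eB; subst A B.
  have AB := proper_sub pAB.
  case: ex => ex.
    constructor 3; split; first by rewrite ex depI_leaf.
    by rewrite ex (parI_leaf sA bB AB) ey.
  constructor 2; split; first by rewrite ey depI_edge.
  by rewrite /parI ey depI_edge //= ex root_orbI.
Qed.

End CaseI.

Lemma contr_all : fs_contractible D (@orbit_le gT).
Proof.
case: caseI_or_II => [[S0 [F0 [sylS0 bF0 F0S0 S0F0]]]|cII].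
  exact: (contr_I sylS0 bF0 F0S0 S0F0).
have [S0 sylS0] := Sylow_exists p G.
have [X0 [sX0 X0S0 S0X0]] := cent_small_exists sylS0.
exact: (contr_II cII sylS0 sX0 X0S0 S0X0).
Qed.

End Grp.

End Grp3.
Import Grp3.

Lemma orb_card (gT : finGroupType) (G : {group gT}) (c d : {set {set gT}}) :
  chain_orbit G c = chain_orbit G d -> #|c| = #|d|.
Proof.
move=> e; have : d \in chain_orbit G c by rewrite e; apply/imsetP; exists 1%g; rewrite ?group1 // /chain_conj (eq_imset _ (@conjsg1 gT)) imset_id.
by case/imsetP => g _ ->; rewrite card_cconj.
Qed.

Lemma no3_of_height (gT : finGroupType) (G : {group gT}) (p : nat) :
  poset_height (Ap_orbits G p) (@orbit_le gT) 1 ->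
  forall A B C : {set gT}, A \in Ap G p -> B \in Ap G p -> C \in Ap G p ->
  A \proper B -> B \proper C -> False.
Proof.
move=> [_ hmax] A B C AAp BAp CAp pAB pBC.
have AB := proper_sub pAB; have BC := proper_sub pBC.
have pAC := proper_trans pAB pBC.
have nAB : A != B by move: pAB; rewrite properEneq => /andP [].
have nBC : B != C by move: pBC; rewrite properEneq => /andP [].
have nAC : A != C by move: pAC; rewrite properEneq => /andP [].
have in3 : forall X, X \in [set A; B; C] -> [\/ X = A, X = B | X = C].
  move=> X; rewrite !inE => /orP [/orP [/eqP ->|/eqP ->]|/eqP ->].
  + by constructor 1.
  + by constructor 2.
  + by constructor 3.
have c3 : [set A; B; C] \in Ap_chains G p.
  rewrite inE; apply/and3P; split.
  - by apply/subsetP => X /in3 [->|->|->].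
  - by apply/set0Pn; exists A; rewrite !inE eqxx.
  - have AC := subset_trans AB BC.
    apply/forall_inP => X /in3 hX; apply/forall_inP => Y /in3 hY.
    by case: hX => ->; case: hY => ->; rewrite ?subxx ?AB ?BC ?AC ?orbT.
have c1 := sing_chain AAp.
have c2 := pair_chain AAp BAp AB.
have sub23 : [set A; B] \subset [set A; B; C].
  by apply/subsetP => X /set2P [->|->]; rewrite !inE eqxx ?orbT.
have card3 : #|[set A; B]| < #|[set A; B; C]|.
  apply: proper_card; rewrite properEneq sub23 andbT.
  apply/eqP => e; have : C \in [set A; B] by rewrite e !inE eqxx orbT.
  by case/set2P => eC; [move: nAC|move: nBC]; rewrite eC eqxx.
have card2 : #|[set A; B]| = 2 by rewrite cards2 nAB.
set o1 := chain_orbit G [set A]; set o2 := chain_orbit G [set A; B];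
set o3 := chain_orbit G [set A; B; C].
have := hmax [:: o1; o2; o3].
rewrite /= !(imset_f (chain_orbit G)) //= => /(_ isT).
have s12 : [set A] \subset [set A; B] by rewrite sub1set set21.
rewrite /lt_of (le_sub G s12) /=.
rewrite (le_sub G sub23).
rewrite /=.
have n12 : o1 != o2.
  by apply/eqP => /orb_card; rewrite cards1 card2.
have n23 : o2 != o3.
  by apply/eqP => /orb_card e; move: card3; rewrite e ltnn.
by rewrite n12 n23 => /(_ isT).
Qed.

Theorem corollary5p10 (gT : finGroupType) (G : {group gT}) (p : nat) :
  prime p -> p %| #|G| ->
  poset_height (Ap_orbits G p) (@orbit_le gT) 1 ->
  fs_contractible (Ap_orbits G p) (@orbit_le gT).
Proof.
move=> pr pG h.
exact: (contr_all pr pG (no3_of_height h)).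
Qed.
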